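(* Let $(\theta,\varphi)$ be a random dynamical system on $\mathbb{X}=\mathbb{N}_0^L$ as in the context, and let $A:\mathcal{Q}\to\mathcal{P}(\mathbb{X})$ be a $\varphi$-invariant random set with $A_q$ nonempty and finite for all $q$. Then the following are equivalent: (I) $A$ is a weak attractor: for every finite $B\subset\mathbb{X}$, $\mathrm{dist}(\varphi^n_q(B),A_{\theta^nq})\to0$ in probability as $n\to\infty$; (II) $A$ is a forward attractor: for every finite $B\subset\mathbb{X}$, $\lim_{n\to\infty}\mathrm{dist}(\varphi^n_q(B),A_{\theta^nq})=0$ $\mathbb{P}$-a.s.; (III) $A$ is a forward point attractor: the condition in (II) holds for every $B=\{x\}$, $x\in\mathbb{X}$; (IV) $A$ is a weak point attractor: the condition in (I) holds for every $B=\{x\}$, $x\in\mathbb{X}$; (V) for every finite random set $K:\mathcal{Q}\to\mathcal{P}(\mathbb{X})$, $\mathrm{dist}(\varphi^n_q(K_q),A_{\theta^nq})\to0$ in probability as $n\to\infty$.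
   Context: $(\mathcal{Q},\mathcal{F},\mathbb{P})$ is a probability space and $\theta:\mathcal{Q}\to\mathcal{Q}$ is an invertible, measurable, $\mathbb{P}$-preserving and $\mathbb{P}$-ergodic map; $\theta^n$ denotes its iterates ($n\in\mathbb{Z}$). $\varphi:\mathbb{N}_0\times\mathcal{Q}\times\mathbb{X}\to\mathbb{X}$, $(n,q,x)\mapsto\varphi^n_q(x)$, is measurable and satisfies the cocycle property $\varphi^0_q=\mathrm{id}$, $\varphi^{n+m}_q=\varphi^n_{\theta^mq}\circ\varphi^m_q$. $d$ is the Euclidean distance on $\mathbb{X}$, $d(x,B)=\inf_{y\in B}d(x,y)$, and $\mathrm{dist}(A,B)=\sup_{x\in A}d(x,B)$ for nonempty $A,B$. A random set is a map $K:\mathcal{Q}\to\mathcal{P}(\mathbb{X})$ with $q\mapsto d(x,K_q)$ measurable for each $x\in\mathbb{X}$; it is a finite random set if $K_q$ is nonempty and finite for all $q$. A random set $A$ is $\varphi$-invariant if $\varphi^n_q(A_q)=A_{\theta^nq}$ for all $n\in\mathbb{N}$, $\mathbb{P}$-a.s. *)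

(* Defs.v *)
From HB Require Import structures.
From mathcomp Require Import all_boot all_order all_algebra.
From mathcomp Require Import all_classical all_reals all_analysis.
From mathcomp Require Import measurable_realfun.
Set Implicit Arguments. Unset Strict Implicit. Unset Printing Implicit Defensive.
Import Order.TTheory GRing.Theory Num.Theory.
Import numFieldNormedType.Exports.
Local Open Scope classical_set_scope.
Local Open Scope ring_scope.

Definition stsp (L : nat) := 'I_L -> nat.

Definition edist {R : realType} {L : nat} (x y : stsp L) : R :=
  Num.sqrt (\sum_(i < L) ((x i)%:R - (y i)%:R) ^+ 2).

(* d(x,B) = inf_{y in B} d(x,y), in the extended reals (= +oo if B empty). *)
Definition dpt {R : realType} {L : nat} (x : stsp L) (B : set (stsp L)) : \bar R :=
  ereal_inf [set (edist x y)%:E | y in B].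

Definition hdist {R : realType} {L : nat} (A B : set (stsp L)) : \bar R :=
  ereal_sup [set dpt (R:=R) x B | x in A].

Definition mpds {d} {T : measurableType d} {R : realType}
    (P : probability T R) (th : T -> T) : Prop :=
  [/\ exists thinv : T -> T,
        [/\ cancel th thinv, cancel thinv th & measurable_fun setT thinv],
      measurable_fun setT th,
      (forall A, measurable A -> P (th @^-1` A) = P A) &
      (forall A, measurable A -> th @^-1` A = A -> P A = 0%E \/ P A = 1%E)].

(* phi : N_0 x Q x X -> X measurable (X, N_0 discrete and countable, so this
   is measurability of every fibre), with the cocycle property. *)
Definition cocycle {d} {T : measurableType d} {L : nat}
    (th : T -> T) (phi : nat -> T -> stsp L -> stsp L) : Prop :=
  [/\ (forall n x y, measurable [set q | phi n q x = y]),
      (forall q, phi 0%N q = id) &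
      (forall n m q, phi (n + m)%N q = phi n (iter m th q) \o phi m q)].

Definition random_set {d} {T : measurableType d} {R : realType} {L : nat}
    (K : T -> set (stsp L)) : Prop :=
  forall x, measurable_fun setT (fun q : T => (dpt x (K q) : \bar R)).

Definition finite_random_set {d} {T : measurableType d} {R : realType} {L : nat}
    (K : T -> set (stsp L)) : Prop :=
  random_set (R:=R) K /\ forall q, K q !=set0 /\ finite_set (K q).

Definition phi_invariant {d} {T : measurableType d} {R : realType} {L : nat}
    (P : probability T R) (th : T -> T) (phi : nat -> T -> stsp L -> stsp L)
    (A : T -> set (stsp L)) : Prop :=
  forall n, (0 < n)%N -> {ae P, forall q, phi n q @` A q = A (iter n th q)}.

Definition cvg_in_prob {d} {T : measurableType d} {R : realType}
    (P : probability T R) (Z : nat -> T -> \bar R) : Prop :=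
  forall eps : R, 0 < eps ->
    (fun n => P [set q | (eps%:E < Z n q)%E]) @ \oo --> 0%E.

Definition cvg_as {d} {T : measurableType d} {R : realType}
    (P : probability T R) (Z : nat -> T -> \bar R) : Prop :=
  {ae P, forall q, (fun n => Z n q) @ \oo --> 0%E}.

Definition attr_seq {d} {T : measurableType d} {R : realType} {L : nat}
    (th : T -> T) (phi : nat -> T -> stsp L -> stsp L)
    (A : T -> set (stsp L)) (K : T -> set (stsp L)) : nat -> T -> \bar R :=
  fun n q => hdist (R:=R) (phi n q @` K q) (A (iter n th q)).

(* Main.v *)
Require Import Defs.
From HB Require Import structures.
From mathcomp Require Import all_boot all_order all_algebra.
From mathcomp Require Import all_classical all_reals all_analysis.
From mathcomp Require Import measurable_realfun.
Import Order.TTheory GRing.Theory Num.Theory.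
Local Open Scope classical_set_scope.
Local Open Scope ring_scope.
Section Dist.
Variables (R : realType) (L : nat).
Implicit Types (x y : stsp L) (S B : set (stsp L)).

Lemma edist_xx x : Defs.edist (R:=R) x x = 0.
Proof. by rewrite /Defs.edist big1 ?sqrtr0 // => i _; rewrite subrr expr0n. Qed.

Lemma edist_ge0 x y : 0 <= Defs.edist (R:=R) x y.
Proof. exact: sqrtr_ge0. Qed.

Lemma edist_ge1 x y : x <> y -> 1 <= Defs.edist (R:=R) x y.
Proof.
move=> xy.
have [i hi] : exists i, x i <> y i.
  apply: contra_notP xy => /forallNP H; apply: funext => i.
  by have := H i => /contra_notP; apply.
have h1 : 1 <= ((x i)%:R - (y i)%:R) ^+ 2 :> R.
  have : (x i != y i) by apply/eqP.
  case: (ltngtP (x i) (y i)) => // h _.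
  - rewrite -sqrrN opprB -natrB; last exact: ltnW.
    by rewrite -natrX ler1n expn_gt0 subn_gt0 h.
  - rewrite -(natrB R (ltnW h)).
    by rewrite -natrX ler1n expn_gt0 subn_gt0 h.
have hs : 1 <= \sum_(j < L) ((x j)%:R - (y j)%:R) ^+ 2 :> R.
  rewrite (bigD1 i) //=; apply: le_trans h1 _; rewrite lerDl.
  by apply: sumr_ge0 => j _; exact: sqr_ge0.
rewrite /Defs.edist -[X in X <= _]sqrtr1 ler_psqrt ?qualifE //=.
by apply: le_trans hs.
Qed.

Lemma dpt_ge0 x S : (0 <= dpt (R:=R) x S)%E.
Proof. by apply: le_ereal_inf_tmp => _ [y _ <-]; rewrite lee_fin edist_ge0. Qed.

Lemma dpt_mem x S : S x -> dpt (R:=R) x S = 0%E.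
Proof.
move=> Sx; apply/eqP; rewrite eq_le dpt_ge0 andbT.
by apply: ereal_inf_lbound; exists x => //; rewrite edist_xx.
Qed.

Lemma dpt_nmem x S : ~ S x -> (1 <= dpt (R:=R) x S)%E.
Proof.
move=> Sx; apply: le_ereal_inf_tmp => _ [y Sy <-]; rewrite lee_fin edist_ge1 //.
by move=> e; apply: Sx; rewrite e.
Qed.

Lemma dpt_lt1 x S : (dpt (R:=R) x S < 1%E)%E <-> S x.
Proof.
split; last by move=> /dpt_mem ->; rewrite lte01.
move=> h; apply: contrapT => /dpt_nmem h2.
by move: (lt_le_trans h h2); rewrite ltxx.
Qed.

Lemma hdist_gtP (e : \bar R) S B :
  (e < hdist (R:=R) S B)%E <-> exists2 z, S z & (e < dpt (R:=R) z B)%E.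
Proof.
split.
  by move=> /ereal_sup_gt [_ [z Sz <-] h]; exists z.
move=> [z Sz h]; apply: lt_le_trans h _; apply: ereal_sup_ubound; by exists z.
Qed.

Lemma hdist_sub0 S B : S !=set0 -> S `<=` B -> hdist (R:=R) S B = 0%E.
Proof.
move=> [z Sz] SB; apply/eqP; rewrite eq_le; apply/andP; split.
  by apply: ge_ereal_sup => _ [y Sy <-]; rewrite dpt_mem //; exact: SB.
by apply: ereal_sup_ubound; exists z => //; rewrite dpt_mem //; exact: SB.
Qed.

Lemma hdist_nsub S B : ~ (S `<=` B) -> (1 <= hdist (R:=R) S B)%E.
Proof.
move=> /existsNP [z /not_implyP [Sz Bz]].
have := @dpt_nmem z B Bz; move/le_trans; apply; apply: ereal_sup_ubound; by exists z.
Qed.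

End Dist.
Definition enum_st (L : nat) (k : nat) : stsp L :=
  match (unpickle k : option {ffun 'I_L -> nat}) with
  | Some f => (fun i => f i) | None => (fun _ => 0%N) end.

Lemma enum_stK (L : nat) (x : stsp L) : enum_st L (pickle [ffun i => x i]) = x.
Proof. by rewrite /enum_st pickleK; apply: funext => i; rewrite ffunE. Qed.

Section Meas.
Variables (R : realType) (d : measure_display) (T : measurableType d) (L : nat).
Variables (th : T -> T) (phi : nat -> T -> stsp L -> stsp L) (A : T -> set (stsp L)).
Hypothesis mth : measurable_fun setT th.
Hypothesis mphi : forall n x y, measurable [set q | phi n q x = y].
Hypothesis rA : random_set (R:=R) A.

Lemma measurable_iter n : measurable_fun setT (iter n th).
Proof.
elim: n => [|n IH] /=; first exact: measurable_id.
exact: (measurableT_comp mth IH).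
Qed.

Lemma preimT (f : T -> T) (mf : measurable_fun setT f) (B : set T) :
  measurable B -> measurable (f @^-1` B).
Proof. by move=> mB; have := mf measurableT B mB; rewrite setTI. Qed.

Lemma meas_gtf (f : T -> \bar R) (e : \bar R) : measurable_fun setT f ->
  measurable [set q | (e < f q)%E].
Proof.
move=> mf; have := mf measurableT _ (emeasurable_itv `]e, +oo[); rewrite setTI.
congr measurable; apply: funext => q /=; apply: propext.
by rewrite in_itv /= andbT.
Qed.

Lemma meas_pt (K : T -> set (stsp L)) : random_set (R:=R) K ->
  forall x, measurable [set q | K q x].
Proof.
move=> rK x; have := rK x measurableT _ (emeasurable_itv `]-oo, 1%E[); rewrite setTI.
congr measurable; apply: funext => q /=; apply: propext.
rewrite in_itv /=; split; first by move/dpt_lt1.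
by move=> ?; apply/dpt_lt1.
Qed.

Lemma meas_G n x : measurable [set q | A (iter n th q) (phi n q x)].
Proof.
have -> : [set q | A (iter n th q) (phi n q x)] =
  \bigcup_j ([set q | phi n q x = enum_st L j] `&`
             (iter n th) @^-1` [set q | A q (enum_st L j)]).
  apply: funext => q; apply: propext; split.
    move=> h; exists (pickle [ffun i => phi n q x i]) => //.
    by rewrite enum_stK.
  by move=> [j _ [/= -> ]].
apply: bigcupT_measurable => j; apply: measurableI => //.
exact: (@preimT _ (measurable_iter n) _ (@meas_pt A rA _)).
Qed.

Lemma meas_gt (K : T -> set (stsp L)) (mK : forall x, measurable [set q | K q x])
  n (e : \bar R) :
  measurable [set q | (e < attr_seq (R:=R) th phi A K n q)%E].
Proof.
have -> : [set q | (e < attr_seq (R:=R) th phi A K n q)%E] =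
  \bigcup_k ([set q | K q (enum_st L k)] `&` \bigcup_j
    ([set q | phi n q (enum_st L k) = enum_st L j] `&`
     (iter n th) @^-1` [set q | (e < dpt (R:=R) (enum_st L j) (A q))%E])).
  apply: funext => q; apply: propext; rewrite /attr_seq /=; split.
    move=> /hdist_gtP [_ [x Kx <-] h].
    exists (pickle [ffun i => x i]) => //; rewrite enum_stK; split => //.
    exists (pickle [ffun i => phi n q x i]) => //; rewrite enum_stK //.
  move=> [k _ [Kk [j _ [/= h1 h2]]]]; apply/hdist_gtP.
  by exists (phi n q (enum_st L k)); [exists (enum_st L k) | rewrite h1].
apply: bigcupT_measurable => k; apply: measurableI; first exact: mK.
apply: bigcupT_measurable => j; apply: measurableI => //.
apply: (@preimT _ (measurable_iter n)); apply: meas_gtf.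
exact: rA.
Qed.

End Meas.
Section Prob.
Variables (R : realType) (d : measure_display) (T : measurableType d).
Variable (P : probability T R).

Lemma ev_lt (u : nat -> \bar R) (e : R) : (0 < e)%R -> u @ \oo --> 0%E ->
  \forall n \near \oo, (u n < e%:E)%E.
Proof.
move=> e0 hu; have h : (0%E < e%:E)%E by rewrite lte_fin.
exact: (hu _ (open_ereal_lt' h)).
Qed.

Lemma as_prob (Z : nat -> T -> \bar R)
  (mZ : forall n (e : R), measurable [set q | (e%:E < Z n q)%E]) :
  cvg_as P Z -> cvg_in_prob P Z.
Proof.
move=> [N [mN PN0 sub]] eps eps0.
pose B n := [set q | (eps%:E < Z n q)%E].
pose G n := \bigcup_k B (n + k)%N.
have mG n : measurable (G n) by apply: bigcupT_measurable => k; exact: mZ.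
have mC : measurable (\bigcap_n G n) by apply: bigcapT_measurable.
have hG : P \o G @ \oo --> P (\bigcap_n G n).
  apply: nonincreasing_cvg_mu => //.
    by apply: le_lt_trans (probability_le1 P (mG 0%N)) _; rewrite ltey.
  move=> n m nm; rewrite subsetEset => q [k _ h].
  exists (m - n + k)%N => //; by rewrite addnA subnKC.
have PC : P (\bigcap_n G n) = 0%E.
  apply/eqP; rewrite eq_le measure_ge0 andbT -PN0; apply: le_measure; rewrite ?inE //.
  move=> q Cq; apply: sub => /= hq.
  have [n0 _ hn0] : exists2 n0, True & forall n, (n0 <= n)%N -> (Z n q < eps%:E)%E.
    have := @ev_lt _ eps eps0 hq => -[n0 _ h]; exists n0 => //.
  have [k _ hk] := Cq n0 I.
  have := hn0 (n0 + k)%N (leq_addr _ _); rewrite ltNge => /negP; apply.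
  exact: ltW.
rewrite PC in hG.
apply: (@squeeze_cvge _ _ _ _ (cst 0%E) _ (P \o G)); last 2 first.
  exact: cvg_cst.
  exact: hG.
apply: nearW => n; rewrite /cst /= measure_ge0 /=.
apply: le_measure; rewrite ?inE //.
by move=> q h; exists 0%N => //; rewrite addn0.
Qed.

End Prob.
Section Main.
Variables (R : realType) (d : measure_display) (T : measurableType d).
Variables (P : probability T R) (L : nat) (th : T -> T).
Variables (phi : nat -> T -> stsp L -> stsp L) (A : T -> set (stsp L)).
Hypothesis mth : measurable_fun setT th.
Hypothesis pres : forall B, measurable B -> P (th @^-1` B) = P B.
Hypothesis mphi : forall n x y, measurable [set q | phi n q x = y].
Hypothesis coc : forall n m q, phi (n + m)%N q = phi n (iter m th q) \o phi m q.
Hypothesis rA : random_set (R:=R) A.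
Hypothesis inv : phi_invariant P th phi A.

Lemma meas_const (B : set (stsp L)) y : measurable [set q : T | B y].
Proof.
case: (pselect (B y)) => h.
  by rewrite (_ : [set q | B y] = setT) //; apply: funext => q; apply: propext.
by rewrite (_ : [set q | B y] = set0) //; apply: funext => q; apply: propext.
Qed.

Definition Gs n x := [set q | A (iter n th q) (phi n q x)].

Lemma attr_K (K : T -> set (stsp L)) n q : K q !=set0 ->
  (phi n q @` K q `<=` A (iter n th q) ->
     attr_seq (R:=R) th phi A K n q = 0%E) /\
  (~ (phi n q @` K q `<=` A (iter n th q)) ->
     (1 <= attr_seq (R:=R) th phi A K n q)%E).
Proof.
move=> [z Kz]; split => h; rewrite /attr_seq.
  by apply: hdist_sub0 => //; exists (phi n q z); exists z.
exact: hdist_nsub.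
Qed.

Lemma attr_single n x q :
  ((2^-1 : R)%:E < attr_seq (R:=R) th phi A (fun _ => [set x]) n q)%E <->
  ~ Gs n x q.
Proof.
have ne : (fun _ : T => [set x]) q !=set0 by exists x.
have [h0 h1] := @attr_K (fun _ => [set x]) n q ne.
split.
  move=> h g; rewrite h0 in h; last first.
    by move=> _ [y -> <-].
  by move: h; rewrite lte_fin ltNge invr_ge0 ler0n.
move=> g; apply: lt_le_trans (h1 _); first by rewrite lte_fin invf_lt1 // ltr1n.
by move=> hs; apply: g; apply: hs; exists x.
Qed.

Lemma pres_iter n B : measurable B -> P (iter n th @^-1` B) = P B.
Proof.
elim: n B => [|n IH] B mB //=.
rewrite (_ : iter n.+1 th @^-1` B = iter n th @^-1` (th @^-1` B)) //.
rewrite IH ?pres //; exact: (@preimT _ _ _ mth).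
Qed.

Lemma step_G N1 (sub1 : ~` [set q | phi 1 q @` A q = A (iter 1 th q)] `<=` N1)
  m x q : ~ N1 (iter m th q) -> Gs m x q -> Gs m.+1 x q.
Proof.
move=> nN g.
have e1 : phi 1 (iter m th q) @` A (iter m th q) = A (iter 1 th (iter m th q)).
  by apply: contrapT => ne; apply: nN; apply: sub1.
rewrite /Gs /= -add1n coc /=.
have -> : th (iter m th q) = iter 1 th (iter m th q) by [].
by rewrite -e1; exists (phi m q x).
Qed.

Lemma L_pt x :
  cvg_in_prob P (attr_seq (R:=R) th phi A (fun _ => [set x])) ->
  {ae P, forall q, \forall n \near \oo, Gs n x q}.
Proof.
move=> hIV.
have [N1 [mN1 PN1 sub1]] := @inv 1%N (ltn0Sn 0).
have H1 : {ae P, forall q, forall n, ~ N1 (iter n th q)}.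
  apply: ae_foralln => n; exists (iter n th @^-1` N1); split.
  - exact: (@preimT _ _ _ (measurable_iter _ _ _ mth n)).
  - by have := @pres_iter n N1 mN1; rewrite PN1.
  - by move=> q /= h; apply: contrapT.
pose Cs := \bigcap_n ~` Gs n x.
have mCs : measurable Cs.
  apply: bigcapT_measurable => n; apply: measurableC.
  exact: (@meas_G R _ _ _ _ _ _ mth mphi rA n x).
have PCs : P Cs = 0%E.
  apply/eqP; rewrite eq_le measure_ge0 andbT.
  have h2 : (0 < (2^-1 : R))%R by rewrite invr_gt0 ltr0n.
  apply: (cvge_ge _ (hIV _ h2)); apply: nearW => n.
  apply: le_measure; rewrite ?inE //.
    by apply: (@meas_gt R _ _ _ _ _ _ mth mphi rA); exact: meas_const.
  by move=> q Cq; apply/attr_single; exact: Cq.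
have H2 : {ae P, forall q, ~ Cs q}.
  by exists Cs; split => // q /= h; apply: contrapT.
apply: filterS2 H1 H2 => q h1 h2.
have [n0 g0] : exists n0, Gs n0 x q.
  apply: contrapT => hn; apply: h2 => n _ g; apply: hn; by exists n.
apply: filterS (nbhs_infty_ge n0) => m; elim: m => [|m IH].
  by rewrite leqn0 => /eqP <-.
rewrite leq_eqVlt => /orP [/eqP <- //|]; rewrite ltnS => /IH.
exact: (@step_G N1 sub1 m x q (h1 m)).
Qed.

Lemma L_K (K : T -> set (stsp L)) (hK : forall q, K q !=set0 /\ finite_set (K q)) :
  (forall x, {ae P, forall q, \forall n \near \oo, Gs n x q}) ->
  cvg_as P (attr_seq (R:=R) th phi A K).
Proof.
move=> H.
have H' : {ae P, forall q, forall k, \forall n \near \oo, Gs n (enum_st L k) q}.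
  by apply: ae_foralln => k; exact: H.
apply: filterS H' => q hq.
have hx : forall x, \forall n \near \oo, Gs n x q.
  by move=> x; have := hq (pickle [ffun i => x i]); rewrite enum_stK.
have [ne /finite_seqP [s es]] := hK q.
have ev : \forall n \near \oo, forall x, x \in s -> Gs n x q.
  elim: s {es} => [|a s IH]; first by apply: nearW => n x; rewrite in_nil.
  apply: filterS2 (hx a) IH => n ga gs x; rewrite in_cons => /orP [/eqP -> //|].
  exact: gs.
apply: cvg_near_cst; apply: filterS ev => n hn.
have [h0 _] := @attr_K K n q ne; apply: h0 => _ [y Ky <-].
by apply: hn; rewrite es in Ky; exact: Ky.
Qed.

Lemma ev_of_as x : cvg_as P (attr_seq (R:=R) th phi A (fun _ => [set x])) ->
  {ae P, forall q, \forall n \near \oo, Gs n x q}.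
Proof.
apply: filterS => q hq.
have := @ev_lt R _ 1 ltr01 hq; apply: filterS => n hn.
apply: contrapT => g.
have ne : (fun _ : T => [set x]) q !=set0 by exists x.
have [_ h1] := @attr_K (fun _ => [set x]) n q ne.
have h2 : ~ (phi n q @` [set x] `<=` A (iter n th q)).
  by move=> hs; apply: g; apply: hs; exists x.
by move: (h1 h2); rewrite leNgt hn.
Qed.

End Main.

Theorem theorem4p3 (R : realType) (d : measure_display) (T : measurableType d)
    (P : probability T R) (L : nat) (th : T -> T)
    (phi : nat -> T -> stsp L -> stsp L) (A : T -> set (stsp L)) :
  mpds P th ->
  cocycle th phi ->
  random_set (R:=R) A ->
  (forall q, A q !=set0 /\ finite_set (A q)) ->
  phi_invariant P th phi A ->
  let I := forall B : set (stsp L), B !=set0 -> finite_set B ->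
             cvg_in_prob P (attr_seq (R:=R) th phi A (fun _ => B)) in
  let II := forall B : set (stsp L), B !=set0 -> finite_set B ->
             cvg_as P (attr_seq (R:=R) th phi A (fun _ => B)) in
  let III := forall x : stsp L,
             cvg_as P (attr_seq (R:=R) th phi A (fun _ => [set x])) in
  let IV := forall x : stsp L,
             cvg_in_prob P (attr_seq (R:=R) th phi A (fun _ => [set x])) in
  let V := forall K : T -> set (stsp L), finite_random_set (R:=R) K ->
             cvg_in_prob P (attr_seq (R:=R) th phi A K) in
  [/\ I <-> II, II <-> III, III <-> IV & IV <-> V].
Proof.
move=> [_ mth pres _] [mphi _ coc] rA hA inv I II III IV V.
have II_I : II -> I.
  move=> h B ne fin; apply: as_prob; last exact: h.
  move=> n e; apply: (@meas_gt R _ _ _ _ _ _ mth mphi rA).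
  exact: meas_const.
have I_IV : I -> IV by move=> h x; apply: h; [exists x | exact: finite_set1].
have II_III : II -> III by move=> h x; apply: h; [exists x | exact: finite_set1].
have IV_III : IV -> III.
  move=> h x; apply: (@L_K R d T P L th phi A).
    by move=> q; split; [exists x | exact: finite_set1].
  by move=> y; apply: (@L_pt R d T P L th phi A mth pres mphi coc rA inv); exact: h.
have III_II : III -> II.
  move=> h B ne fin; apply: (@L_K R d T P L th phi A) => // y.
  by apply: ev_of_as; exact: h.
have IV_V : IV -> V.
  move=> h K [rK hK]; apply: as_prob.
    move=> n e; apply: (@meas_gt R _ _ _ _ _ _ mth mphi rA).
    exact: meas_pt.
  apply: (@L_K R d T P L th phi A) => // y.
  by apply: (@L_pt R d T P L th phi A mth pres mphi coc rA inv); exact: h.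
have V_IV : V -> IV.
  move=> h x; apply: h; split.
    by move=> y; exact: measurable_cst.
  by move=> q; split; [exists x | exact: finite_set1].
split; split; auto.
Qed.
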